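(* Let $\gamma\in F$ be hyperbolic, with associated sequences $\{U_n^\pm\}$ and relations $\sim^\pm$. Let $\phi$ be a continuous $\Gamma$-invariant function on $\mathcal B^0_\infty$ whose induced function on $\mathcal B^0_\infty/\Gamma$ has compact support, and set $\phi^+=\limsup_{n\to+\infty}\phi\circ\gamma^n$ and $\phi^-=\limsup_{n\to+\infty}\phi\circ\gamma^{-n}$. Then $f\sim^+g$ implies $\phi^+(f)=\phi^+(g)$, and $f\sim^-g$ implies $\phi^-(f)=\phi^-(g)$.
   Context: Setting: a (3,4)-configuration data $(W,\Gamma,O_3,O_4)$ ($W$ metrisable, $\Gamma$ discrete acting continuously, $O_3,O_4$ open subsets of $W^3,W^4$ off the diagonals, $\Gamma$-invariant with proper action, $p(O_4)=O_3$). $B=\mathbb{QP}^1$ is the vertex set of the Farey tessellation of $\mathbb H^2$ and tribones are the vertex triples of its ideal triangles. $\mathcal B_\infty=W^B$ (product topology), $\mathcal B^0_\infty$ the open subset of maps sending at least one tribone into $O_3$; $\Gamma$ acts by post-composition, $\gamma\in F=PSL(2,\mathbb Z)$ by $f\mapsto f\circ\gamma$. For hyperbolic $\gamma$, $\{U_n^+\}$, $\{U_n^-\}$ are decreasing sequences of connected subsets of $B$ (unions of quadribones with connected edge set in the dual tree) with empty intersections and $U_0^+\cap U_0^-=\emptyset$, such that every finite $K\subset B$ satisfies $\gamma^p(K)\subset U_n^+$ (resp. $\gamma^{-p}(K)\subset U_n^-$) for some $p$. $f\sim^+g$ means $f|_{U_n^+}=g|_{U_n^+}$ for some $n$; $f\sim^-g$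 means $f|_{U_n^-}=g|_{U_n^-}$ for some $n$. *)

(* Defs.v *)
From HB Require Import structures.
From mathcomp Require Import all_boot all_order all_algebra.
From mathcomp Require Import all_classical all_reals all_analysis.
From Stdlib Require Import Relation_Operators.
Set Implicit Arguments. Unset Strict Implicit. Unset Printing Implicit Defensive.
Import Order.TTheory GRing.Theory Num.Theory.
Local Open Scope classical_set_scope.
Local Open Scope ring_scope.

(* B = QP^1 = Q u {oo}; [None] is the point at infinity. *)
Definition QP1 := option rat.

(* Moebius action of an integer 2x2 matrix [[a,b],[c,d]] : x |-> (ax+b)/(cx+d).
   Elements of F = PSL(2,Z) are represented by matrices of SL(2,Z)
   (M and -M act identically). *)
Definition mob (M : 'M[int]_2) (x : QP1) : QP1 :=
  let a : rat := (M 0 0)%:~R in let b : rat := (M 0 1)%:~R in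
  let c : rat := (M 1 0)%:~R in let d : rat := (M 1 1)%:~R in
  match x with
  | Some q => if c * q + d == 0 then None else Some ((a * q + b) / (c * q + d))
  | None => if c == 0 then None else Some (a / c)
  end.

Definition SL2Z (M : 'M[int]_2) : Prop := \det M = 1.

Definition hyperbolic (M : 'M[int]_2) : Prop := SL2Z M /\ (2 < `| \tr M |)%R.

Definition tri3 (x y z : QP1) : set QP1 := [set w | w = x \/ w = y \/ w = z].

(* vertex sets of the ideal triangles of the Farey tessellation: the
   PSL(2,Z)-images of the ideal triangle (0, 1, oo) *)
Definition farey_triangle (T : set QP1) : Prop :=
  exists M, SL2Z M /\ T = tri3 (mob M (Some 0)) (mob M (Some 1)) (mob M None).

Definition tribone (t : QP1 * QP1 * QP1) : Prop :=
  [/\ t.1.1 <> t.1.2, t.1.1 <> t.2, t.1.2 <> t.2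
    & farey_triangle (tri3 t.1.1 t.1.2 t.2)].

(* edges of the dual tree: pairs of distinct adjacent (sharing an edge)
   Farey triangles; the associated quadribone is the union of their vertices *)
Definition dual_edge (e : set QP1 * set QP1) : Prop :=
  [/\ farey_triangle e.1, farey_triangle e.2, e.1 <> e.2 &
      exists x y, [/\ x <> y, e.1 x, e.1 y, e.2 x & e.2 y]].

Definition quadribone (e : set QP1 * set QP1) : set QP1 := e.1 `|` e.2.

Definition edges_touch (e e' : set QP1 * set QP1) : Prop :=
  e.1 = e'.1 \/ e.1 = e'.2 \/ e.2 = e'.1 \/ e.2 = e'.2.

Definition edges_connected (E : set (set QP1 * set QP1)) : Prop :=
  forall e e', E e -> E e' ->
    clos_refl_trans _ (fun a b => [/\ E a, E b & edges_touch a b]) e e'.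

Definition quadribone_connected (U : set QP1) : Prop :=
  exists E : set (set QP1 * set QP1),
    [/\ (forall e, E e -> dual_edge e), edges_connected E &
        U = \bigcup_(e in E) quadribone e].

Definition off_diag3 {W : Type} (x : W * W * W) : Prop :=
  [/\ x.1.1 <> x.1.2, x.1.1 <> x.2 & x.1.2 <> x.2].

Definition off_diag4 {W : Type} (x : W * W * W * W) : Prop :=
  [/\ off_diag3 x.1, x.1.1.1 <> x.2, x.1.1.2 <> x.2 & x.1.2 <> x.2].

Definition act3 {G W : Type} (act : G -> W -> W) (g : G) (x : W * W * W) :=
  (act g x.1.1, act g x.1.2, act g x.2).

Definition act4 {G W : Type} (act : G -> W -> W) (g : G) (x : W * W * W * W) :=
  (act3 act g x.1, act g x.2).

Definition proj43 {W : Type} (x : W * W * W * W) : W * W * W := x.1.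

Definition proper_action {G : Type} {X : topologicalType}
  (a : G -> X -> X) (O : set X) : Prop :=
  forall K, compact K -> K `<=` O ->
    finite_set [set g | (a g @` K) `&` K !=set0].

Definition g_invariant {G X : Type} (a : G -> X -> X) (O : set X) : Prop :=
  forall g x, O x -> O (a g x).

Notation Binf W := {ptws QP1 -> W}.

Definition Binf0 {W : Type} (O3 : set (W * W * W)) : set (Binf W) :=
  [set f | exists t, tribone t /\ O3 (f t.1.1, f t.1.2, f t.2)].

(* Subsets of X0/G are encoded by their (G-g_invariant) preimages S in X0, and
   open subsets of the quotient topology by G-g_invariant open subsets of X0;
   the statement is the open-cover definition of compactness in X0/G. *)
Definition quotient_compact {G : Type} {X : topologicalType}
  (a : G -> X -> X) (X0 : set X) (S : set X) : Prop :=
  forall (I : Type) (O : I -> set X),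
    (forall i, [/\ open (O i), O i `<=` X0 & g_invariant a (O i)]) ->
    S `<=` \bigcup_i O i ->
    exists J : set I, finite_set J /\ S `<=` \bigcup_(i in J) O i.

(* Preimage in X0 of the support of the function induced on X0/G by a
   G-g_invariant function phi: the closure in X0 of [phi <> 0]. *)
Definition support_in {X : topologicalType} {R : realType}
  (X0 : set X) (phi : X -> R) : set X :=
  X0 `&` closure [set x | X0 x /\ phi x != 0].

Definition phi_plus {W : Type} {R : realType} (phi : Binf W -> R)
  (M : 'M[int]_2) (f : QP1 -> W) : \bar R :=
  limn_esup (fun n => (phi (f \o mob (M ^+ n)))%:E).

Definition phi_minus {W : Type} {R : realType} (phi : Binf W -> R)
  (M : 'M[int]_2) (f : QP1 -> W) : \bar R :=
  limn_esup (fun n => (phi (f \o mob ((invmx M) ^+ n)))%:E).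

Definition sim_U {W : Type} (U : nat -> set QP1) (f g : QP1 -> W) : Prop :=
  exists n, forall x, U n x -> f x = g x.

(* Main.v *)
Require Import Defs.
From HB Require Import structures.
From mathcomp Require Import all_boot all_order all_algebra.
From mathcomp Require Import all_classical all_reals all_analysis.
From mathcomp Require Import ring lra.
Import Order.TTheory GRing.Theory Num.Theory.
Import numFieldNormedType.Exports.
Local Open Scope classical_set_scope.
Local Open Scope ring_scope.


Definition mobr (a b c d : rat) (x : QP1) : QP1 :=
  match x with
  | Some q => if c * q + d == 0 then None else Some ((a * q + b) / (c * q + d))
  | None => if c == 0 then None else Some (a / c)
  end.

Lemma mobr_comp a b c d e f g h x : e * h - f * g != 0 ->
  mobr a b c d (mobr e f g h x) =
  mobr (a*e+b*g) (a*f+b*h) (c*e+d*g) (c*f+d*h) x.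
Proof.
move=> dY; case: x => [q|] /=.
- have [yq0|yq0] := eqVneq (g * q + h) 0.
  + have eqf : e * q + f != 0.
      apply: contra dY => /eqP H; apply/eqP.
      have -> : h = - (g * q) by rewrite -(subr0 h) -yq0; ring.
      have -> : f = - (e * q) by rewrite -(subr0 f) -H; ring.
      ring.
    have -> : (c * e + d * g) * q + (c * f + d * h) = c * (e * q + f) + d * (g * q + h) by ring.
    rewrite yq0 mulr0 addr0 /= mulf_eq0 (negbTE eqf) orbF.
    case: eqP => // /eqP c0; congr Some.
    have -> : (a * e + b * g) * q + (a * f + b * h) = a * (e * q + f) + b * (g * q + h) by ring.
    rewrite yq0 mulr0 addr0; field; rewrite ?eqf ?c0 ?andbT //.
  + rewrite /=.
    have E1 : c * ((e * q + f) / (g * q + h)) + d = ((c * e + d * g) * q + (c * f + d * h)) / (g * q + h) by field.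
    rewrite E1 mulf_eq0 invr_eq0 (negbTE yq0) orbF.
    case: eqP => // /eqP H; congr Some; field; by rewrite H yq0.
- have [g0|g0] := eqVneq g 0.
  + have e0 : e != 0 by apply: contra dY => /eqP ->; rewrite g0; apply/eqP; ring.
    rewrite g0 /= !mulr0 !addr0 mulf_eq0 (negbTE e0) orbF.
    case: eqP => // /eqP c0; congr Some; field; by rewrite c0 e0.
  + rewrite /=.
    have E1 : c * (e / g) + d = (c * e + d * g) / g by field.
    rewrite E1 mulf_eq0 invr_eq0 (negbTE g0) orbF.
    case: eqP => // /eqP H; congr Some; field; by rewrite H g0.
Qed.
Lemma mobE (M : 'M[int]_2) x :
  mob M x = mobr (M 0 0)%:~R (M 0 1)%:~R (M 1 0)%:~R (M 1 1)%:~R x.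
Proof. by []. Qed.

Lemma det2 (Y : 'M[int]_2) : \det Y = Y 0 0 * Y 1 1 - Y 0 1 * Y 1 0.
Proof.
rewrite (expand_det_row _ 0) !big_ord_recl big_ord0 /cofactor !det_mx11 !mxE /=.
have l1 : lift (0:'I_2) (0:'I_1) = 1 by apply/val_inj.
have l2 : lift (ord0:'I_2) (ord0:'I_1) = 1 by apply/val_inj.
have l3 : lift (1:'I_2) (0:'I_1) = 0 by apply/val_inj.
rewrite ?l1 ?l2 ?l3 /bump /= expr0 expr1 mulN1r mul1r addr0 mulrN.
by [].
Qed.

Lemma mob_comp (X Y : 'M[int]_2) x : \det Y = 1 -> mob X (mob Y x) = mob (X *m Y) x.
Proof.
move=> dY; rewrite !mobE mobr_comp; last first.
  rewrite -!intrM -intrB -det2 dY; by [].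
have l2 : lift (ord0:'I_2) (ord0:'I_1) = 1 by apply/val_inj.
rewrite !mxE !big_ord_recl !big_ord0 !addr0 l2 !intrD !intrM; by [].
Qed.

Lemma mob1 x : mob 1%:M x = x.
Proof. by rewrite mobE !mxE /=; case: x => [q|] /=; rewrite ?mul0r ?add0r ?mul1r ?addr0 ?oner_eq0 ?divr1. Qed.

Lemma detX1 (A : 'M[int]_2) p : \det A = 1 -> \det (A ^+ p) = 1.
Proof.
move=> dA; elim: p => [|p IH]; first by rewrite expr0 det1.
by rewrite exprS -mulmxE det_mulmx dA IH mulr1.
Qed.

Lemma mob_inv (A : 'M[int]_2) p : \det A = 1 ->
  exists B, \det B = 1 /\ forall x, mob (A ^+ p) (mob B x) = x.
Proof.
move=> dA; have dP := detX1 A p dA.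
have uP : A ^+ p \in unitmx by rewrite unitmxE dP unitr1.
exists (invmx (A ^+ p)); split; first by rewrite det_inv dP invr1.
move=> x; rewrite mob_comp; last by rewrite det_inv dP invr1.
by rewrite mulmxV // mob1.
Qed.


Lemma tri3_image (h : QP1 -> QP1) a b c : tri3 (h a) (h b) (h c) = h @` tri3 a b c.
Proof.
apply/seteqP; split => w.
  by case=> [->|[->|->]]; [exists a; [left|] | exists b; [right;left|] | exists c; [right;right|]].
by case=> y [->|[->|->]] <-; [left|right;left|right;right].
Qed.

Lemma farey_mob (B : 'M[int]_2) T : \det B = 1 -> farey_triangle T ->
  farey_triangle (mob B @` T).
Proof.
move=> dB [C [dC ->]]; exists (B *m C); split.
  by rewrite /SL2Z det_mulmx dB dC mulr1.
by rewrite -tri3_image !mob_comp.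
Qed.

Lemma Binf0_comp (W : Type) (O3 : set (W * W * W)) (A : 'M[int]_2) p (f : QP1 -> W) :
  \det A = 1 -> Binf0 O3 f -> Binf0 O3 (f \o mob (A ^+ p)).
Proof.
move=> dA [t [[d1 d2 d3 ft] Ot]].
have [B [dB BK]] := mob_inv A p dA.
have inj : forall x y, mob B x = mob B y -> x = y.
  by move=> x y E; rewrite -(BK x) -(BK y) E.
exists (mob B t.1.1, mob B t.1.2, mob B t.2); split.
  split => /=; [by move/inj|by move/inj|by move/inj|].
  by rewrite tri3_image; apply: farey_mob.
by rewrite /= !BK.
Qed.

Lemma esup_le (R : realType) (u v : nat -> R) (e : R) N :
  (forall n, (N <= n)%N -> u n <= v n + e) ->
  (limn_esup (fun n => (u n)%:E) <= limn_esup (fun n => (v n)%:E) + e%:E)%E.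
Proof.
move=> H; rewrite /limn_esup !limf_esupE.
rewrite -leeBlDr //.
apply: le_ereal_inf_tmp => _ [V FV <-].
rewrite leeBlDr //.
have FV' : \oo (V `&` [set n | (N <= n)%N]).
  apply: filterI => //; by exists N.
apply: (@le_trans _ _ (ereal_sup ((fun n => (u n)%:E) @` (V `&` [set n | (N <= n)%N])))).
  by apply: ereal_inf_lbound; exists (V `&` [set n | (N <= n)%N]).
apply: ge_ereal_sup => _ [n [Vn Nn] <-].
apply: le_trans (_ : (v n)%:E + e%:E <= _)%E.
  by rewrite -EFinD lee_fin; apply: H.
rewrite leeD2r //; apply: ereal_sup_ubound; by exists n.
Qed.

Lemma esup_close (R : realType) (u v : nat -> R) :
  (forall e, 0 < e -> exists N, forall n, (N <= n)%N -> `|u n - v n| < e) ->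
  limn_esup (fun n => (u n)%:E) = limn_esup (fun n => (v n)%:E).
Proof.
move=> H; apply/eqP; rewrite eq_le; apply/andP; split; apply/lee_addgt0Pr => e e0;
  have [N HN] := H e e0; apply: (@esup_le _ _ _ _ N) => n /HN.
- by move=> /ltr_normlP [h1 h2]; lra.
- by move=> /ltr_normlP [h1 h2]; lra.
Qed.

Definition basic {W : Type} (K : seq QP1) (U : QP1 -> set W) : set (QP1 -> W) :=
  [set g | forall x, x \in K -> U x (g x)].

Definition Fh {R : realType} {W : pseudoMetricType R} (h : Binf W) : set_system (Binf W) :=
  [set A | exists K U, (forall x, open (U x) /\ U x (h x)) /\ basic K U `<=` A].

Lemma Fh_filter (R : realType) (W : pseudoMetricType R) (h : Binf W) : Filter (Fh h).
Proof.
constructor.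
- exists [::], (fun _ => setT); split => //; move=> x; split => //; exact: openT.
- move=> P Q [K1 [U1 [H1 S1]]] [K2 [U2 [H2 S2]]].
  exists (K1 ++ K2), (fun x => U1 x `&` U2 x); split.
    move=> x; have [? ?] := H1 x; have [? ?] := H2 x; split => //; exact: openI.
  move=> g Hg; split; [apply: S1 | apply: S2] => x Hx; have := Hg x; rewrite mem_cat Hx ?orbT => /(_ isT) [].
  + by [].
  + by [].
- by move=> P Q PQ [K [U [H S]]]; exists K, U; split => //; apply: subset_trans PQ.
Qed.

Lemma nbhs_Fh (R : realType) (W : pseudoMetricType R) (h : Binf W) (V : set (Binf W)) :
  nbhs h V -> Fh h V.
Proof.
have : (Fh h) --> h.
  apply/cvg_sup; first exact: Fh_filter.
  move=> i A; rewrite nbhsE => -[B [Bop Bh] BA].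
  case: Bop => C Cop CB.
  exists [:: i], (fun x => if x == i then C else setT); split.
    move=> x; case: eqP => [->|]; last by split => //; exact: openT.
    by split => //; rewrite -CB in Bh.
  move=> g Hg; apply: BA; rewrite -CB /=; have := Hg i; rewrite eqxx; apply; exact: mem_head.
by apply.
Qed.

Lemma open_proj (R : realType) (W : pseudoMetricType R) (x : QP1) (A : set W) :
  open A -> open [set g : Binf W | A (g x)].
Proof.
move=> oA.
have H : continuous (fun g : Binf W => g x) := @proj_continuous QP1 (fun _ => W) x.
exact: ((continuousP _).1 H A oA).
Qed.

Lemma basic_open (R : realType) (W : pseudoMetricType R) K (U : QP1 -> set W) :
  (forall x, open (U x)) -> open (basic K U : set (Binf W)).
Proof.
move=> oU; elim: K => [|x K IH].
  rewrite (_ : basic _ _ = setT); first exact: openT.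
  by apply/seteqP; split => g //= _ y.
rewrite (_ : basic _ _ = [set g : Binf W | U x (g x)] `&` basic K U).
  apply: openI => //; exact: open_proj.
apply/seteqP; split => g /=.
  by move=> H; split; [apply: H; rewrite mem_head | move=> y yK; apply: H; rewrite in_cons yK orbT].
by move=> [H1 H2] y; rewrite in_cons => /orP [/eqP ->|/H2].
Qed.

Lemma Fh_nbhs (R : realType) (W : pseudoMetricType R) (h : Binf W) (V : set (Binf W)) :
  Fh h V -> nbhs h V.
Proof.
move=> [K [U [HU sV]]].
have H : open_nbhs h (basic K U : set (Binf W)).
  split; first by apply: basic_open => x; case: (HU x).
  by move=> x _; case: (HU x).
exact: (filterS sV (open_nbhs_nbhs H)).
Qed.

Lemma Fh_proj (R : realType) (W : pseudoMetricType R) (h : Binf W) x (A : set W) :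
  open A -> A (h x) -> Fh h [set g | A (g x)].
Proof.
move=> oA Ah; exists [:: x], (fun y => if y == x then A else setT); split.
  by move=> y; case: eqP => [->|_]; split => //; exact: openT.
by move=> g /(_ x (mem_head _ _)); rewrite eqxx.
Qed.

Lemma Binf0_open (R : realType) (W : pseudoMetricType R) (O3 : set (W * W * W)) :
  open O3 -> open (Binf0 O3 : set (Binf W)).
Proof.
move=> oO; rewrite openE => f [t [tt Ot]].
have : nbhs (f t.1.1, f t.1.2, f t.2) O3 by apply: open_nbhs_nbhs.
move=> [[A12 A3] /= [nA12 nA3] sA].
move: nA12 => [[A1 A2] /= [nA1 nA2] sA12].
move: nA1 nA2 nA3; rewrite !nbhsE => -[B1 [oB1 B1f] s1] [B2 [oB2 B2f] s2] [B3 [oB3 B3f] s3].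
apply: Fh_nbhs.
have F1 := @Fh_proj _ _ f _ _ oB1 B1f; have F2 := @Fh_proj _ _ f _ _ oB2 B2f; have F3 := @Fh_proj _ _ f _ _ oB3 B3f.
have FF := @Fh_filter _ _ f.
apply: filterS (filterI F1 (filterI F2 F3)) => g [g1 [g2 g3]].
exists t; split => //; apply: sA; split => /=; last exact: s3.
by apply: sA12; split => /=; [apply: s1|apply: s2].
Qed.

Lemma Binf0_act (R : realType) (W : pseudoMetricType R) (G : Type) (act : G -> W -> W)
  (O3 : set (W * W * W)) (O3_inv : g_invariant (act3 act) O3) b (f : Binf W) :
  Binf0 O3 f -> Binf0 O3 (act b \o f : Binf W).
Proof. by move=> [t [tt Ot]]; exists t; split => //; exact: (O3_inv b _ Ot). Qed.

Lemma core (R : realType) (W : pseudoMetricType R)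
  (G : Type) (mulG : G -> G -> G) (oneG : G) (invG : G -> G)
  (mulVG : forall a, mulG (invG a) a = oneG)
  (act : G -> W -> W) (act1 : forall w, act oneG w = w)
  (actM : forall a b w, act (mulG a b) w = act a (act b w))
  (act_cont : forall a, continuous (act a))
  (O3 : set (W * W * W)) (O3_open : open O3) (O3_inv : g_invariant (act3 act) O3)
  (phi : Binf W -> R) (phi_cont : {within (Binf0 O3), continuous phi})
  (phi_inv : forall a (f : Binf W), Binf0 O3 f -> phi (act a \o f) = phi f)
  (phi_supp : quotient_compact (fun a (f : Binf W) => act a \o f)
                (Binf0 O3) (support_in (Binf0 O3) phi))
  (sf sg : nat -> Binf W) (Hf : forall n, Binf0 O3 (sf n)) (Hg : forall n, Binf0 O3 (sg n))
  (Hagree : forall K : set QP1, finite_set K ->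
     exists N, forall n, (N <= n)%N -> forall x, K x -> sf n x = sg n x) :
  forall e, 0 < e -> exists N, forall n, (N <= n)%N -> `|phi (sf n) - phi (sg n)| < e.
Proof.
move=> e e0.
have oB : open (Binf0 O3 : set (Binf W)) by exact: Binf0_open.
have cph : {in Binf0 O3, continuous phi} by rewrite -continuous_open_subspace.
have e20 : 0 < e / 2 by rewrite divr_gt0.
have ex : forall h : Binf W, exists KU : seq QP1 * (QP1 -> set W),
  Binf0 O3 h -> [/\ (forall x, open (KU.2 x) /\ KU.2 x (h x)),
     basic KU.1 KU.2 `<=` Binf0 O3 &
     forall h', basic KU.1 KU.2 h' -> `|phi h - phi h'| < e / 2].
  move=> h; have [Bh|nBh] := pselect (Binf0 O3 h); last by exists ([::], fun _ => setT).
  have nV : nbhs h (Binf0 O3 `&` (phi @^-1` ball (phi h) (e / 2))).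
    apply: filterI; first by apply: open_nbhs_nbhs; split.
    exact: (cph h (mem_set Bh) _ (nbhsx_ballx _ _ e20)).
  have [K [U [HU sV]]] := @nbhs_Fh _ _ _ _ nV.
  exists (K, U) => _; split => //=.
    by move=> h' /sV [].
  by move=> h' /sV [_ /=]; rewrite /ball /=.
have [KU HKU] := choice ex.
pose O (h : Binf W) : set (Binf W) :=
  [set f | Binf0 O3 h /\ Binf0 O3 f /\ exists a, basic (KU h).1 (KU h).2 (act a \o f)].
have Oprops : forall h, [/\ open (O h), O h `<=` Binf0 O3 &
    g_invariant (fun a (f : Binf W) => act a \o f) (O h)].
  move=> h; split.
  - have [Bh|nBh] := pselect (Binf0 O3 h); last first.
      rewrite (_ : O h = set0); first exact: open0.
      by apply/seteqP; split => f // [].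
    have [HU _ _] := HKU h Bh.
    rewrite (_ : O h = Binf0 O3 `&` \bigcup_a basic (KU h).1 (fun x => act a @^-1` (KU h).2 x)).
      apply: openI => //; apply: bigcup_open => a _; apply: basic_open => x.
      by apply: ((continuousP _).1 (act_cont a)); case: (HU x).
    apply/seteqP; split => f.
      by move=> [_ [Bf [a Ha]]]; split => //; exists a.
    by move=> [Bf [a _ Ha]]; split => //; split => //; exists a.
  - by move=> f [_ []].
  - move=> b f [Bh [Bf [a Ha]]]; split => //; split; first exact: Binf0_act.
    exists (mulG a (invG b)) => x xK /=.
    by rewrite actM -(actM (invG b)) mulVG act1; exact: Ha.
have cover : support_in (Binf0 O3) phi `<=` \bigcup_h O h.
  move=> f [Bf _]; exists f => //; split => //; split => //; exists oneG.
  have [HU _ _] := HKU f Bf; move=> x _; rewrite /= act1; by case: (HU x).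
have [J [finJ SJ]] := phi_supp _ O Oprops cover.
pose K := \bigcup_(h in J) [set` (KU h).1].
have finK : finite_set K by apply: bigcup_finite => // h _; exact: finite_seq.
have [N HN] := Hagree K finK.
exists N => n Nn.
have key : forall f g : Binf W, Binf0 O3 f -> Binf0 O3 g ->
    (forall x, K x -> f x = g x) -> support_in (Binf0 O3) phi f -> `|phi f - phi g| < e.
  move=> f g Bf Bg fg Sf.
  have [h Jh [Bh [_ [a Ha]]]] := SJ f Sf.
  have [HU sB Hphi] := HKU h Bh.
  have Hag : basic (KU h).1 (KU h).2 (act a \o g).
    move=> x xK; rewrite /= -fg; [exact: Ha | by exists h].
  have := Hphi _ Ha; have := Hphi _ Hag.
  rewrite phi_inv // phi_inv //.
  by move=> /ltr_normlP [h1 h2] /ltr_normlP [h3 h4]; apply/ltr_normlP; split; lra.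
have nS : forall f : Binf W, Binf0 O3 f -> ~ support_in (Binf0 O3) phi f -> phi f = 0.
  move=> f Bf nSf; have [//|nz] := eqVneq (phi f) 0.
  by exfalso; apply: nSf; split => //; apply: subset_closure; split.
have agree := HN n Nn.
have [Sf|nSf] := pselect (support_in (Binf0 O3) phi (sf n)).
  exact: key.
have [Sg|nSg] := pselect (support_in (Binf0 O3) phi (sg n)).
  by rewrite distrC; apply: key => // x Kx; rewrite agree.
by rewrite nS // nS // subrr normr0.
Qed.

Local Open Scope classical_set_scope.
Local Open Scope ring_scope.

Theorem mainTheorem9
  (* W metrisable: a (Hausdorff) metric space *)
  (R : realType) (W : pseudoMetricType R) (hW : hausdorff_space W)
  (* Gamma: a discrete group acting continuously on W *)
  (G : Type) (mulG : G -> G -> G) (oneG : G) (invG : G -> G)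
  (mulGA : forall a b c, mulG a (mulG b c) = mulG (mulG a b) c)
  (mul1G : forall a, mulG oneG a = a)
  (mulVG : forall a, mulG (invG a) a = oneG)
  (act : G -> W -> W)
  (act1 : forall w, act oneG w = w)
  (actM : forall a b w, act (mulG a b) w = act a (act b w))
  (act_cont : forall a, continuous (act a))
  (* O3, O4 *)
  (O3 : set (W * W * W)) (O4 : set (W * W * W * W))
  (O3_open : open O3) (O4_open : open O4)
  (O3_off : O3 `<=` off_diag3) (O4_off : O4 `<=` off_diag4)
  (O3_inv : g_invariant (act3 act) O3) (O4_inv : g_invariant (act4 act) O4)
  (O3_proper : proper_action (act3 act) O3)
  (O4_proper : proper_action (act4 act) O4)
  (O43 : proj43 @` O4 = O3)
  (* a hyperbolic gamma in PSL(2,Z) and the sequences U_n^+, U_n^- *)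
  (M : 'M[int]_2) (hM : hyperbolic M)
  (Up Um : nat -> set QP1)
  (Up_conn : forall n, quadribone_connected (Up n))
  (Um_conn : forall n, quadribone_connected (Um n))
  (Up_decr : forall n, Up n.+1 `<=` Up n)
  (Um_decr : forall n, Um n.+1 `<=` Um n)
  (Up_cap : \bigcap_n Up n = set0)
  (Um_cap : \bigcap_n Um n = set0)
  (Upm_disj : Up 0%N `&` Um 0%N = set0)
  (Up_abs : forall n (K : set QP1), finite_set K ->
      exists p0, forall p, (p0 <= p)%N -> mob (M ^+ p) @` K `<=` Up n)
  (Um_abs : forall n (K : set QP1), finite_set K ->
      exists p0, forall p, (p0 <= p)%N -> mob ((invmx M) ^+ p) @` K `<=` Um n)
  (* phi: continuous Gamma-g_invariant on B^0_oo, compact support mod Gamma *)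
  (phi : Binf W -> R)
  (phi_cont : {within (Binf0 O3), continuous phi})
  (phi_inv : forall a (f : Binf W), Binf0 O3 f -> phi (act a \o f) = phi f)
  (phi_supp : quotient_compact (fun a (f : Binf W) => act a \o f)
                (Binf0 O3) (support_in (Binf0 O3) phi)) :
  (forall f g : QP1 -> W, Binf0 O3 f -> Binf0 O3 g ->
     sim_U Up f g -> phi_plus phi M f = phi_plus phi M g) /\
  (forall f g : QP1 -> W, Binf0 O3 f -> Binf0 O3 g ->
     sim_U Um f g -> phi_minus phi M f = phi_minus phi M g).
Proof.
have dM : \det M = 1 by case: hM.
have dMi : \det (invmx M) = 1 by rewrite det_inv dM invr1.
split.
- move=> f g Bf Bg [n Hn]; rewrite /phi_plus; apply: esup_close.
  apply: (@core R W G mulG oneG invG mulVG act act1 actM act_cont O3 O3_open O3_inv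
     phi phi_cont phi_inv phi_supp (fun k => f \o mob (M ^+ k)) (fun k => g \o mob (M ^+ k))).
  + by move=> k; apply: Binf0_comp.
  + by move=> k; apply: Binf0_comp.
  + move=> K finK; have [p0 Hp] := Up_abs n K finK; exists p0 => p Hp0 x Kx /=.
    by apply: Hn; apply: (Hp p Hp0); exists x.
- move=> f g Bf Bg [n Hn]; rewrite /phi_minus; apply: esup_close.
  apply: (@core R W G mulG oneG invG mulVG act act1 actM act_cont O3 O3_open O3_inv
     phi phi_cont phi_inv phi_supp (fun k => f \o mob (invmx M ^+ k)) (fun k => g \o mob (invmx M ^+ k))).
  + by move=> k; apply: Binf0_comp.
  + by move=> k; apply: Binf0_comp.
  + move=> K finK; have [p0 Hp] := Um_abs n K finK; exists p0 => p Hp0 x Kx /=.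
    by apply: Hn; apply: (Hp p Hp0); exists x.
Qed.
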